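(* Let $(A,\cdot,\circ)$ be a skew brace such that $A = B\circ C$ (i.e. every element of $A$ is of the form $b\circ c$ with $b\in B$, $c\in C$) for some sub-skew braces $B$ and $C$ satisfying all of the following: (1) $B$ and $C$ are trivial skew braces; (2) $B$ and $C$ are normal subgroups of $(A,\circ)$; (3) $B$ and $C$ are right ideals in $A$. Then $A^3 := A*A' = 1$, where $A' = A*A$; that is, $A$ is left nilpotent of index at most $3$.
   Context: A skew brace is a set $A$ with two group operations $\cdot$ (often written by juxtaposition) and $\circ$ such that $a\circ(bc) = (a\circ b)\,a^{-1}\,(a\circ c)$ for all $a,b,c\in A$. The two groups have the same identity $1$; $a^{-1}$ denotes the inverse of $a$ in $(A,\cdot)$ and $\overline{a}$ its inverse in $(A,\circ)$. Define $a*b = a^{-1}(a\circ b)b^{-1}$. For subsets $X,Y\subseteq A$, $X*Y$ denotes the subgroup of $(A,\cdot)$ generated by all $x*y$ with $x\in X$, $y\in Y$. A sub-skew brace is a subset that is a subgroup of both $(A,\cdot)$ and $(A,\circ)$. A skew brace (or sub-skew brace) $B$ is trivial if $a\circ b = ab$ for all $a,b\in B$. A subgroup $I$ of $(A,\cdot)$ is a left ideal in $A$ if $A*I\subseteq I$, and a right ideal in $A$ if $I*A\subseteq I$. *)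

(* Defs.v *)
Record SkewBrace := {
  carrier :> Type;
  sb_mul : carrier -> carrier -> carrier;
  sb_inv : carrier -> carrier;
  sb_one : carrier;
  sb_circ : carrier -> carrier -> carrier;
  sb_cinv : carrier -> carrier;
  sb_mulA : forall a b c, sb_mul a (sb_mul b c) = sb_mul (sb_mul a b) c;
  sb_mul1x : forall a, sb_mul sb_one a = a;
  sb_mulx1 : forall a, sb_mul a sb_one = a;
  sb_mulVx : forall a, sb_mul (sb_inv a) a = sb_one;
  sb_mulxV : forall a, sb_mul a (sb_inv a) = sb_one;
  sb_circA : forall a b c, sb_circ a (sb_circ b c) = sb_circ (sb_circ a b) c;
  sb_circ1x : forall a, sb_circ sb_one a = a;
  sb_circx1 : forall a, sb_circ a sb_one = a;
  sb_circVx : forall a, sb_circ (sb_cinv a) a = sb_one;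
  sb_circxV : forall a, sb_circ a (sb_cinv a) = sb_one;
  sb_compat : forall a b c,
    sb_circ a (sb_mul b c) = sb_mul (sb_mul (sb_circ a b) (sb_inv a)) (sb_circ a c)
}.

Section Defs.
Variable A : SkewBrace.

Definition sb_star (a b : A) : A :=
  sb_mul A (sb_mul A (sb_inv A a) (sb_circ A a b)) (sb_inv A b).

Definition is_mul_subgroup (H : A -> Prop) : Prop :=
  H (sb_one A) /\ (forall x y, H x -> H y -> H (sb_mul A x y)) /\
  (forall x, H x -> H (sb_inv A x)).

Definition is_circ_subgroup (H : A -> Prop) : Prop :=
  H (sb_one A) /\ (forall x y, H x -> H y -> H (sb_circ A x y)) /\
  (forall x, H x -> H (sb_cinv A x)).

Definition gen_mul (S : A -> Prop) (x : A) : Prop :=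
  forall H, is_mul_subgroup H -> (forall s, S s -> H s) -> H x.

Definition star_set (X Y : A -> Prop) : A -> Prop :=
  gen_mul (fun z => exists x y, X x /\ Y y /\ z = sb_star x y).

Definition full_set : A -> Prop := fun _ => True.

Definition is_sub_skew_brace (B : A -> Prop) : Prop :=
  is_mul_subgroup B /\ is_circ_subgroup B.

Definition is_trivial_sub (B : A -> Prop) : Prop :=
  forall a b, B a -> B b -> sb_circ A a b = sb_mul A a b.

Definition is_circ_normal (B : A -> Prop) : Prop :=
  is_circ_subgroup B /\
  forall a b, B b -> B (sb_circ A (sb_circ A a b) (sb_cinv A a)).

Definition is_right_ideal (I : A -> Prop) : Prop :=
  is_mul_subgroup I /\ forall x, star_set I full_set x -> I x.

Definition A2 : A -> Prop := star_set full_set full_set.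
Definition A3 : A -> Prop := star_set full_set A2.

End Defs.

(* Main.v *)
Require Import Defs.

Definition lam (A : SkewBrace) (a x : A) : A := sb_mul A (sb_inv A a) (sb_circ A a x).

Lemma mul_cancel_r (A : SkewBrace) (x y z : A) :
  sb_mul A x z = sb_mul A y z -> x = y.
Proof.
  intro H. rewrite <- (sb_mulx1 A x), <- (sb_mulx1 A y), <- (sb_mulxV A z), !sb_mulA, H.
  reflexivity.
Qed.

Lemma circ_cancel_l (A : SkewBrace) (x y z : A) :
  sb_circ A z x = sb_circ A z y -> x = y.
Proof.
  intro H. rewrite <- (sb_circ1x A x), <- (sb_circ1x A y), <- (sb_circVx A z), <- !sb_circA, H.
  reflexivity.
Qed.

Lemma cinv_cinv (A : SkewBrace) (c : A) : sb_cinv A (sb_cinv A c) = c.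
Proof.
  apply (circ_cancel_l A _ _ (sb_cinv A c)). rewrite sb_circxV, sb_circVx. reflexivity.
Qed.

Lemma inv_one (A : SkewBrace) : sb_inv A (sb_one A) = sb_one A.
Proof. rewrite <- (sb_mulx1 A (sb_inv A (sb_one A))). apply sb_mulVx. Qed.

Lemma lam_mul (A : SkewBrace) (a x y : A) :
  lam A a (sb_mul A x y) = sb_mul A (lam A a x) (lam A a y).
Proof. unfold lam. rewrite sb_compat, !sb_mulA. reflexivity. Qed.

Lemma circ_lam (A : SkewBrace) (a x : A) : sb_circ A a x = sb_mul A a (lam A a x).
Proof. unfold lam. rewrite sb_mulA, sb_mulxV, sb_mul1x. reflexivity. Qed.

Lemma lam_of (A : SkewBrace) (a x y : A) : sb_circ A a x = sb_mul A a y -> lam A a x = y.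
Proof. intro H. unfold lam. rewrite H, sb_mulA, sb_mulVx, sb_mul1x. reflexivity. Qed.

Lemma lam_circ (A : SkewBrace) (a b x : A) :
  lam A (sb_circ A a b) x = lam A a (lam A b x).
Proof.
  apply lam_of. rewrite <- sb_circA, (circ_lam A b x), sb_compat.
  unfold lam. rewrite !sb_mulA. reflexivity.
Qed.

Lemma lam_one (A : SkewBrace) (a : A) : lam A a (sb_one A) = sb_one A.
Proof. unfold lam. rewrite sb_circx1, sb_mulVx. reflexivity. Qed.

Lemma lam_inv (A : SkewBrace) (a x : A) : lam A a (sb_inv A x) = sb_inv A (lam A a x).
Proof.
  apply (mul_cancel_r A _ _ (lam A a x)). rewrite <- lam_mul, !sb_mulVx, lam_one.
  reflexivity.
Qed.

Lemma right_ideal_lam (A : SkewBrace) (X : A -> Prop) (x a : A) :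
  is_right_ideal A X -> X x -> X (sb_mul A (lam A x a) (sb_inv A a)).
Proof.
  intros [_ H] Hx. apply H. unfold star_set, gen_mul. intros H0 _ Hs. apply Hs.
  exists x, a. split; [exact Hx | split; [exact Logic.I | reflexivity]].
Qed.

Lemma key (A : SkewBrace) (X Y : A -> Prop) :
  (forall x x', X x -> X x' -> lam A x x' = x') ->
  (forall y y', Y y -> Y y' -> lam A y y' = y') ->
  (forall y x, X x -> X (sb_circ A (sb_circ A (sb_cinv A y) x) y)) ->
  (forall y a, Y y -> Y (sb_mul A (lam A y a) (sb_inv A a))) ->
  (forall a, exists y x, Y y /\ X x /\ a = sb_circ A y x) ->
  forall c b, Y c -> X b -> forall a,
    lam A a (sb_mul A (lam A c b) (sb_inv A b)) = sb_mul A (lam A c b) (sb_inv A b).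
Proof.
  intros HXt HYt HXn HYr Hdec c b Hc Hb a.
  assert (Yk : Y (sb_mul A (lam A c b) (sb_inv A b))) by (apply HYr; exact Hc).
  destruct (Hdec a) as [y1 [x1 [Hy1 [Hx1 ->]]]].
  rewrite lam_circ.
  assert (E1 : lam A x1 (lam A c b) = lam A c b).
  { pose (x1' := sb_circ A (sb_circ A (sb_cinv A c) x1) c).
    assert (Hx1' : X x1') by (apply HXn; exact Hx1).
    assert (E : sb_circ A c x1' = sb_circ A x1 c).
    { unfold x1'. rewrite !sb_circA, sb_circxV, sb_circ1x. reflexivity. }
    assert (E2 : lam A c (lam A x1' b) = lam A x1 (lam A c b)).
    { rewrite <- !lam_circ, E. reflexivity. }
    rewrite (HXt x1' b Hx1' Hb) in E2. symmetry. exact E2. }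
  rewrite lam_mul, lam_inv, E1, (HXt x1 b Hx1 Hb).
  apply HYt; assumption.
Qed.

Lemma prod_dec (A : SkewBrace) (X Y : A -> Prop) :
  is_right_ideal A X ->
  (forall a, exists x y, X x /\ Y y /\ a = sb_circ A x y) ->
  forall a, exists x y, X x /\ Y y /\ a = sb_mul A x y.
Proof.
  intros HR Hdec a. destruct (Hdec a) as [x [y [Hx [Hy ->]]]].
  exists (sb_mul A x (sb_mul A (lam A x y) (sb_inv A y))), y.
  split; [| split; [exact Hy|]].
  - pose proof HR as HR'. destruct HR' as [[_ [Hm _]] _]. apply Hm; [exact Hx|].
    apply right_ideal_lam; [exact HR|exact Hx].
  - rewrite circ_lam, <- !sb_mulA, sb_mulVx, sb_mulx1. reflexivity.
Qed.

Lemma lam_split (A : SkewBrace) (Y : A -> Prop) :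
  (forall y y', Y y -> Y y' -> lam A y y' = y') ->
  forall c x d, Y c -> Y d ->
  lam A c (sb_mul A x d) = sb_mul A (sb_mul A (lam A c x) (sb_inv A x)) (sb_mul A x d).
Proof.
  intros HYt c x d Hc Hd. rewrite lam_mul, (HYt c d Hc Hd).
  rewrite <- !sb_mulA, (sb_mulA A (sb_inv A x) x d), sb_mulVx, sb_mul1x. reflexivity.
Qed.

Theorem theorem1p3 (A : SkewBrace) (B C : A -> Prop) :
  is_sub_skew_brace A B -> is_sub_skew_brace A C ->
  (forall a : A, exists b c, B b /\ C c /\ a = sb_circ A b c) ->
  is_trivial_sub A B -> is_trivial_sub A C ->
  is_circ_normal A B -> is_circ_normal A C ->
  is_right_ideal A B -> is_right_ideal A C ->
  forall x : A, A3 A x -> x = sb_one A.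
Proof.
  intros HB HC Hdec HBt HCt HBn HCn HBr HCr x Hx.
  assert (HBt' : forall x x', B x -> B x' -> lam A x x' = x')
    by (intros u v Hu Hv; apply lam_of; apply HBt; assumption).
  assert (HCt' : forall x x', C x -> C x' -> lam A x x' = x')
    by (intros u v Hu Hv; apply lam_of; apply HCt; assumption).
  assert (Nconj : forall (X : A -> Prop), is_circ_normal A X ->
            forall y x, X x -> X (sb_circ A (sb_circ A (sb_cinv A y) x) y)).
  { intros X [_ HN] y u Hu. pose proof (HN (sb_cinv A y) u Hu) as H.
    rewrite cinv_cinv in H. exact H. }
  assert (HdecCB : forall a, exists c b, C c /\ B b /\ a = sb_circ A c b).
  { intro a. destruct (Hdec a) as [b [c [Hb [Hc ->]]]].
    exists (sb_circ A (sb_circ A b c) (sb_cinv A b)), b.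
    split; [apply (proj2 HCn); exact Hc | split; [exact Hb|]].
    rewrite <- sb_circA, sb_circVx, sb_circx1. reflexivity. }
  assert (HpBC := prod_dec A B C HBr Hdec).
  assert (HpCB := prod_dec A C B HCr HdecCB).
  set (Fix := fun z : A => forall a, lam A a z = z).
  assert (Fsub : is_mul_subgroup A Fix).
  { split; [|split].
    - intro a. apply lam_one.
    - intros u v Hu Hv a. rewrite lam_mul, Hu, Hv. reflexivity.
    - intros u Hu a. rewrite lam_inv, Hu. reflexivity. }
  assert (K1 : forall c y, C c -> exists k, Fix k /\ lam A c y = sb_mul A k y).
  { intros c y Hc. destruct (HpBC y) as [u [d [Hu [Hd ->]]]].
    exists (sb_mul A (lam A c u) (sb_inv A u)). split.
    - intro a. apply (key A B C HBt' HCt' (Nconj B HBn) (fun y a H => right_ideal_lam A C y a HCr H) HdecCB); assumption.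
    - apply (lam_split A C HCt'); assumption. }
  assert (K2 : forall b y, B b -> exists k, Fix k /\ lam A b y = sb_mul A k y).
  { intros b y Hb. destruct (HpCB y) as [u [d [Hu [Hd ->]]]].
    exists (sb_mul A (lam A b u) (sb_inv A u)). split.
    - intro a. apply (key A C B HCt' HBt' (Nconj C HCn) (fun y a H => right_ideal_lam A B y a HBr H) Hdec); assumption.
    - apply (lam_split A B HBt'); assumption. }
  assert (HA2 : forall y, A2 A y -> Fix y).
  { intros y Hy. apply Hy; [exact Fsub|].
    intros s [a [z [_ [_ ->]]]].
    change (Fix (sb_mul A (lam A a z) (sb_inv A z))).
    destruct (Hdec a) as [b [c [Hb [Hc ->]]]].
    rewrite lam_circ.
    destruct (K1 c z Hc) as [k1 [Hk1 E1]]. destruct (K2 b z Hb) as [k2 [Hk2 E2]].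
    rewrite E1, lam_mul, Hk1, E2, <- !sb_mulA, sb_mulxV, sb_mulx1.
    apply Fsub; assumption. }
  apply Hx.
  - split; [reflexivity | split].
    + intros u v -> ->. apply sb_mul1x.
    + intros u ->. apply inv_one.
  - intros s [a [y [_ [Hy ->]]]].
    change (sb_mul A (lam A a y) (sb_inv A y) = sb_one A).
    rewrite (HA2 y Hy a). apply sb_mulxV.
Qed.
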